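(* Fix $c\in(0,1)$ and let $S:=[-1,-c)\cup(c,1]$. For $f\in L^1_{\mathrm{loc}}(\mathbb{R})$ let $$h(\gamma)=Kf(\gamma):=\int_{\mathbb{R}} f(t)\,\chi_S\Big(\frac{\gamma}{|t|}\Big)\,dt,\qquad\gamma\in\mathbb{R}.$$ Then: (i) If $f\in L^1(\mathbb{R})$, then $\sum_{j\in\mathbb{Z}} h(c^j\gamma)=\int_{\mathbb{R}}f(t)\,dt$ for all $\gamma\in\mathbb{R}\setminus\{0\}$. (ii) If $f\in C^k(\mathbb{R})$ for some $k\in\mathbb{N}\cup\{0\}$ and $f$ is supported away from the origin (i.e., $f$ vanishes on a neighborhood of $0$), then $h\in C^{k+1}(\mathbb{R})$.
   Context: $\chi_S$ denotes the indicator function of $S$; equivalently $Kf(\gamma)=\int_{-|\gamma|/c}^{-|\gamma|}f(t)\,dt+\int_{|\gamma|}^{|\gamma|/c}f(t)\,dt$. *)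

(* Defs.v *)
From HB Require Import structures.
From mathcomp Require Import all_boot all_order all_algebra.
From mathcomp Require Import all_classical all_reals all_analysis.
Set Implicit Arguments. Unset Strict Implicit. Unset Printing Implicit Defensive.
Import Order.TTheory GRing.Theory Num.Theory.
Import numFieldNormedType.Exports.
Local Open Scope classical_set_scope.
Local Open Scope ring_scope.

Definition Sset (R : realType) (c : R) : set R :=
  [set x | (-1 <= x < - c) \/ (c < x <= 1)].

Definition Kop (R : realType) (c : R) (f : R -> R) (g : R) : R :=
  Rintegral (@lebesgue_measure R) setT
    (fun t => f t * \1_(Sset c) (g / `|t|)).

Fixpoint Ck (R : realType) (k : nat) (f : R -> R) : Prop :=
  match k with
  | 0 => continuous f
  | k'.+1 => (forall x : R, derivable f x 1) /\ Ck k' (derive1 f)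
  end.

(* Main.v *)
Require Import Defs.
From HB Require Import structures.
From mathcomp Require Import all_boot all_order all_algebra.
From mathcomp Require Import all_classical all_reals all_analysis.
From mathcomp Require Import lra ring.
Import Order.TTheory GRing.Theory Num.Theory.
Import numFieldNormedType.Exports.
Local Open Scope classical_set_scope.
Local Open Scope ring_scope.
Set Implicit Arguments. Unset Strict Implicit. Unset Printing Implicit Defensive.

Section CkOn.
Context {R : realType}.

Fixpoint CkOn (k : nat) (U : set R) (f : R -> R) : Prop :=
  match k with
  | 0 => forall x, U x -> {for x, continuous f}
  | k'.+1 => (forall x, U x -> derivable f x 1) /\ CkOn k' U (derive1 f)
  end.

Lemma Ck_CkOn k f : Ck k f -> CkOn k setT f.
Proof.
elim: k f => [|k IH] f /=; first by move=> cf x _; exact: cf.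
by move=> [df /IH]; split.
Qed.

Lemma CkOn_Ck k f : CkOn k setT f -> Ck k f.
Proof.
elim: k f => [|k IH] f /=; first by move=> cf x; exact: cf.
by move=> [df /IH]; split => // x; exact: df.
Qed.

Lemma CkOnS k U V f : V `<=` U -> CkOn k U f -> CkOn k V f.
Proof.
move=> VU; elim: k f => [|k IH] f /=; first by move=> cf x /VU; exact: cf.
by move=> [df /IH]; split => // x /VU; exact: df.
Qed.

Lemma CkOn_glue k f : (forall x, exists U, U x /\ CkOn k U f) -> CkOn k setT f.
Proof.
elim: k f => [|k IH] f /= H.
- by move=> x _; have [U [Ux cf]] := H x; exact: cf.
- split.
  + by move=> x _; have [U [Ux [df _]]] := H x; exact: df.
  + by apply: IH => x; have [U [Ux [_ cf]]] := H x; exists U.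
Qed.

Lemma near_U (U : set R) x (f g : R -> R) : open U -> U x ->
  (forall y, U y -> f y = g y) -> \forall y \near x, f y = g y.
Proof.
move=> oU Ux fg; have : nbhs x U by apply: open_nbhs_nbhs.
by apply: filterS => y; exact: fg.
Qed.

Lemma CkOn_eq k U f g : open U -> (forall x, U x -> f x = g x) ->
  CkOn k U f -> CkOn k U g.
Proof.
move=> oU; elim: k f g => [|k IH] f g fg /=.
- move=> cf x Ux; rewrite /prop_for /continuous_at -(fg x Ux).
  have := cf x Ux; rewrite /prop_for /continuous_at => cfx.
  apply: cvg_trans _ cfx; apply: near_eq_cvg; exact: near_U Ux fg.
- move=> [df cf]; split.
  + by move=> x Ux; apply: near_eq_derivable (df x Ux); exact: near_U Ux fg.
  + apply: IH cf => x Ux; rewrite !derive1E; apply: near_eq_derive.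
    exact: near_U Ux fg.
Qed.

Lemma CkOn_cst0 k U : CkOn k U (fun _ => 0).
Proof.
elim: k => [|k IH] /=; first by move=> x _; exact: cvg_cst.
split; first by move=> x _; exact: derivable_cst.
by rewrite (_ : derive1 _ = fun _ => 0) //; apply/funext => x; exact: derive1_cst.
Qed.

Lemma CkOnD k U f g : open U -> CkOn k U f -> CkOn k U g ->
  CkOn k U (fun x => f x + g x).
Proof.
move=> oU; elim: k f g => [|k IH] f g /=.
- by move=> cf cg x Ux; apply: cvgD; [exact: cf|exact: cg].
- move=> [df cf] [dg cg]; split.
  + by move=> x Ux; exact: derivableD (df x Ux) (dg x Ux).
  + apply: (CkOn_eq oU _ (IH _ _ cf cg)) => x Ux.
    by rewrite !derive1E (deriveD (df x Ux) (dg x Ux)).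
Qed.

Lemma CkOnZ k U a f : open U -> CkOn k U f -> CkOn k U (fun x => a * f x).
Proof.
move=> oU; elim: k f => [|k IH] f /=.
- by move=> cf x Ux; apply: cvgM; [exact: cvg_cst|exact: cf].
- move=> [df cf]; split.
  + by move=> x Ux; have := @derivableZ R R^o R^o f a x 1 (df x Ux).
  + apply: (CkOn_eq oU _ (IH _ cf)) => x Ux.
    by rewrite derive1Ml //; exact: df x Ux.
Qed.

Lemma CkOn_comp k (U V : set R) (a : R) (f : R -> R) : open U -> (forall x, U x -> V (a * x)) ->
  CkOn k V f -> CkOn k U (fun x => f (a * x)).
Proof.
move=> oU UV; elim: k f => [|k IH] f /=.
- move=> cf x Ux.
  apply: (continuous_comp (f := fun x => a * x) (g := f)); last exact: cf (UV _ Ux).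
  by apply: cvgM; [exact: cvg_cst|exact: cvg_id].
- move=> [df cf].
  have dl : forall x, derivable (fun x : R => a * x) x 1.
    by move=> x; apply: derivableM; [exact: derivable_cst|exact: derivable_id].
  split.
  + move=> x Ux.
    have /derivableP H1 := df _ (UV x Ux).
    have /derivableP H2 := dl x.
    case: (is_derive1_comp H1 H2) => d _; exact: d.
  + have := IH _ cf; move/(CkOnZ a oU) => H.
    apply: (CkOn_eq oU _ H) => x Ux.
    rewrite (derive1_comp (f := fun x => a * x) (g := f) (dl x) (df _ (UV x Ux))).
    have dl1 : ((fun y : R => a * y)^`())%classic x = a.
      by rewrite (derive1Ml (f := id)) ?derive1_id ?mulr1 //; exact: derivable_id.
    by rewrite dl1 mulrC.
Qed.

End CkOn.


Section Part2.
Context {R : realType}.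
Notation mu := (@lebesgue_measure R).

Definition Aset (c b : R) : set R := [set t | b <= `|t| /\ c * `|t| < b].
Definition Pint (M : R) (f : R -> R) (x : R) : R := \int[mu]_(t in `[-M, x]) f t.

Lemma Ck_cont k (f : R -> R) : Ck k f -> continuous f.
Proof.
case: k => [//|k] /= [df _] x.
by apply: differentiable_continuous; apply/derivable1_diffP; exact: df.
Qed.

Lemma int_cc (f : R -> R) a b : continuous f -> mu.-integrable `[a, b] (EFin \o f).
Proof.
move=> cf; apply: continuous_compact_integrable; first exact: segment_compact.
exact: continuous_subspaceT.
Qed.

Lemma int_sub (f : R -> R) (D : set R) a b : continuous f -> measurable D ->
  D `<=` `[a, b] -> mu.-integrable D (EFin \o f).
Proof. by move=> cf mD Dab; apply: integrableS (int_cc a b cf). Qed.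

Lemma Sset_norm (c x : R) : 0 < c -> Sset c x <-> c < `|x| <= 1.
Proof.
move=> c0; rewrite /Sset /=; case: (lerP 0 x) => x0.
- rewrite ger0_norm //; split.
  + by case => /andP[h1 h2]; [lra| apply/andP].
  + by move=> /andP[h1 h2]; right; apply/andP.
- rewrite ltr0_norm //; split.
  + by case => /andP[h1 h2]; [apply/andP; split; lra | lra].
  + by move=> /andP[h1 h2]; left; apply/andP; split; lra.
Qed.

Lemma Sset_A (c g t : R) : 0 < c -> Sset c (g / `|t|) <-> Aset c `|g| t.
Proof.
move=> c0; rewrite Sset_norm // /Aset /=.
have [->|t0] := eqVneq t 0.
- rewrite normr0 invr0 mulr0 normr0 mulr0; split.
  + by move/andP=> [h _]; lra.
  + by move=> [h1 h2]; lra.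
- have tp : 0 < `|t| by rewrite normr_gt0.
  rewrite normrM normfV normr_id ltr_pdivlMr // ler_pdivrMr // mul1r [c * _]mulrC.
  by split; [move/andP=> [h1 h2]| move=> [h1 h2]; apply/andP].
Qed.

Lemma Kop_A (c : R) (f : R -> R) (g : R) : 0 < c -> Kop c f g = \int[mu]_(t in Aset c `|g|) f t.
Proof.
move=> c0; rewrite /Kop [RHS]Rintegral_mkcond; apply: eq_Rintegral => t _.
rewrite patchE indicE; case: (boolP (t \in Aset c `|g|)) => tA.
- have -> : g / `|t| \in Sset c.
    by apply/mem_set/(Sset_A _ _ c0); exact: set_mem.
  by rewrite mulr1.
- have : g / `|t| \notin Sset c.
    apply/negP => /set_mem/(Sset_A _ _ c0) h; move/negP: tA; apply; exact: mem_set.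
  by move/negbTE=> ->; rewrite mulr0.
Qed.

End Part2.


Section Part2b.
Context {R : realType}.
Notation mu := (@lebesgue_measure R).

Lemma CkOn_P k (f : R -> R) M : Ck k f -> CkOn k.+1 [set x | -M < x] (Pint M f).
Proof.
move=> cf; have cf0 := Ck_cont cf.
have H x : -M < x -> derivable (Pint M f) x 1 /\ derive1 (Pint M f) x = f x.
  move=> Mx; apply: (@continuous_FTC1 R f (BLeft (-M)) x (x + 1)).
  - by rewrite ltrDl.
  - exact: int_cc.
  - by rewrite /ereal_of_itv_bound /= lte_fin.
  - exact: cf0.
split; first by move=> x /H[].
apply: (CkOn_eq (f := f)); first exact: open_gt.
  by move=> x /H[_ ->].
exact: CkOnS (Ck_CkOn cf).
Qed.

Lemma A_decomp c (f : R -> R) M b : 0 < c < 1 -> continuous f -> 0 < b -> b <= M * c ->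
  \int[mu]_(t in Aset c b) f t =
  (Pint M f (b / c) - Pint M f b) + (Pint M f (- b) - Pint M f (- (b / c))).
Proof.
move=> /andP[c0 c1] cf b0 bM.
have bc : b <= b / c by rewrite ler_pdivlMr //; nra.
have bcM : b / c <= M by rewrite ler_pdivrMr.
have -> : Aset c b = `[b, (b/c)[ `|` `](-(b/c)), (-b)].
  apply/seteqP; split => t; rewrite /Aset /= !in_itv /= [c * _]mulrC -ltr_pdivlMr //;
  set u := b / c; move: bc bcM; rewrite -/u => bc bcM.
  - case: (lerP 0 t) => t0; [rewrite ger0_norm // | rewrite ltr0_norm //] => -[h1 h2];
      [left|right]; apply/andP; split; lra.
  - case: (lerP 0 t) => t0; [rewrite ger0_norm // | rewrite ltr0_norm //] =>
      -[/andP[h1 h2]|/andP[h1 h2]]; split; lra.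
rewrite Rintegral_setU //.
- congr (_ + _).
  + rewrite Rintegral_itv_bndo_bndc; last first.
      apply: (int_sub (a := b) (b := b / c)) => // t /=; rewrite !in_itv /=.
      by move=> /andP[h1 h2]; apply/andP; split => //; exact: ltW.
    rewrite -Rintegral_itv_obnd_cbnd; last first.
      apply: (int_sub (a := b) (b := b / c)) => // t /=; rewrite !in_itv /=.
      by move=> /andP[h1 h2]; apply/andP; split => //; exact: ltW.
    rewrite /Pint -(@Rintegral_itvB R f (BLeft (-M)) (BRight (b / c)) b) //;
      by [exact: int_cc | rewrite bnd_simp; lra].
  + rewrite /Pint -(@Rintegral_itvB R f (BLeft (-M)) (BRight (-b)) (-(b / c))) //;
      by [exact: int_cc | rewrite bnd_simp; lra].
- apply: (int_sub (a := -(b/c)) (b := b / c)) => //; first exact: measurableU.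
  move=> t /=; rewrite !in_itv /= => -[/andP[h1 h2]|/andP[h1 h2]]; apply/andP; split; lra.
- apply/eqP/seteqP; split => // t [] /=; rewrite !in_itv /= => /andP[h1 h2] /andP[h3 h4].
  lra.
Qed.


Lemma local_part k c (f : R -> R) (s B : R) (U : set R) : 0 < c < 1 -> Ck k f ->
  (s = 1 \/ s = -1) -> open U -> 0 < B -> (forall y, U y -> 0 < s * y < B) ->
  CkOn k.+1 U (Kop c f).
Proof.
move=> hc cf hs oU B0 HU; have /andP[c0 c1] := hc.
set M := B / c.
have cf0 := Ck_cont cf.
have HP := CkOn_P M cf.
have BM : B <= M by rewrite /M ler_pdivlMr //; nra.
have Bc : M * c = B by rewrite /M divfK // gt_eqF.
have key y : U y -> [/\ 0 < s * y / c, s * y / c < M & 0 < s * y < B].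
  move=> /HU/andP[h1 h2]; split.
  - by rewrite divr_gt0.
  - by rewrite /M ltr_pM2r ?invr_gt0.
  - by apply/andP.
have E1 y : s / c * y = s * y / c by rewrite mulrAC.
have E4 y : - (s / c) * y = - (s * y / c) by rewrite mulNr mulrAC.
have V1 : forall y, U y -> [set x | -M < x] (s / c * y).
  by move=> y /key[k1 k2 /andP[k3 k4]] /=; rewrite E1; lra.
have V2 : forall y, U y -> [set x | -M < x] (s * y).
  by move=> y /key[k1 k2 /andP[k3 k4]] /=; lra.
have V3 : forall y, U y -> [set x | -M < x] (- s * y).
  by move=> y /key[k1 k2 /andP[k3 k4]] /=; rewrite mulNr; lra.
have V4 : forall y, U y -> [set x | -M < x] (- (s / c) * y).
  by move=> y /key[k1 k2 /andP[k3 k4]] /=; rewrite E4; lra.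
have H1 := CkOn_comp oU V1 HP.
have H2 := CkOn_comp oU V2 HP.
have H3 := CkOn_comp oU V3 HP.
have H4 := CkOn_comp oU V4 HP.
have G := CkOnD oU (CkOnD oU (CkOnD oU H1 (CkOnZ (-1) oU H2)) H3)
   (CkOnZ (-1) oU H4).
apply: (CkOn_eq oU _ G).
- move=> y Uy; have [k1 k2 /andP[k3 k4]] := key y Uy.
  rewrite Kop_A //.
  have -> : `|y| = s * y.
    have ns : `|s| = 1 by case: hs => ->; rewrite ?normrN normr1.
    by rewrite -[LHS]mul1r -ns -normrM gtr0_norm.
  rewrite (A_decomp (M := M)) //; last by rewrite Bc ltW.
  rewrite E1 E4 ?mulN1r ?mul1r ?mulNr; lra.
Qed.

Lemma part2 c (hc : 0 < c < 1) k (f : R -> R) : Ck k f ->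
  (exists2 e : R, 0 < e & forall t : R, `|t| < e -> f t = 0) -> Ck k.+1 (Kop c f).
Proof.
move=> cf [e e0 fe]; have /andP[c0 c1] := hc.
apply: CkOn_Ck; apply: CkOn_glue => x.
have [hx|hx] := ltP `|x| (c * e).
- exists `](-(c*e)), (c*e)[%classic; split.
    by rewrite /= in_itv /= -ltr_norml.
  apply: (CkOn_eq (f := fun _ => 0)); [exact: itv_open | | exact: CkOn_cst0].
  move=> y; rewrite /= in_itv /= -ltr_norml => hy; rewrite Kop_A //.
  have -> : \int[mu]_(t in Aset c `|y|) f t = \int[mu]_(t in Aset c `|y|) (0:R).
    apply: eq_Rintegral => t /set_mem [h1 h2]; apply: fe; rewrite -(ltr_pM2l c0).
    exact: lt_trans h2 hy.
  by rewrite /Rintegral integral0.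
- have ce0 : 0 < c * e by rewrite mulr_gt0.
  case: (ltP 0 x) => x0.
  + exists `]0, (2 * x)[%classic; split.
      by rewrite /= in_itv /=; apply/andP; split; lra.
    apply: (local_part (s := 1) (B := 2 * x)) => //.
    all: try by left.
    all: try exact: itv_open.
    all: try lra.
    by move=> y; rewrite /= in_itv /= mul1r.
  + have xn : x < 0.
      rewrite lt_neqAle x0 andbT; apply/eqP => x0'; move: hx; rewrite x0' normr0; lra.
    exists `](2 * x), 0[%classic; split.
      by rewrite /= in_itv /=; apply/andP; split; lra.
    apply: (local_part (s := -1) (B := - (2 * x))) => //.
    all: try by right.
    all: try exact: itv_open.
    all: try lra.
    move=> y; rewrite /= in_itv /= mulN1r => /andP[h1 h2]; apply/andP; split; lra.
Qed.

End Part2b.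


Section Part1.
Context {R : realType}.
Notation mu := (@lebesgue_measure R).

Lemma series_int (f : R -> R) (F : (set R)^nat) :
  mu.-integrable setT (EFin \o f) -> trivIset setT F -> (forall k, measurable (F k)) ->
  cvgn (series (fun k => \int[mu]_(x in F k) f x)) /\
  limn (series (fun k => \int[mu]_(x in F k) f x)) = \int[mu]_(x in \bigcup_k F k) f x.
Proof.
move=> fi0 tF mF.
have fi : mu.-integrable [set: R] (EFin \o f) := fi0.
have mU : measurable (\bigcup_k F k) by exact: bigcupT_measurable.
have iU : mu.-integrable (\bigcup_k F k) (EFin \o f).
  apply: (integrableS _ _ _ fi0) => //.
pose e k := (\int[mu]_(x in F k) (EFin \o f) x)%E.
have fe k : e k \is a fin_num by apply: integrable_fin_num; [exact: mF | apply: integrableS fi0 => //; exact: mF].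
have sm : summable [set: nat] e.
  by apply: integrable_summable => //; move=> k; exact: mF.
have sm' : summable (fun x => xpredT x) e.
  by rewrite (_ : (fun x => _) = [set: nat]) //; apply/seteqP; split.
have ue k : \int[mu]_(x in F k) f x = fine ((e^\+)%E k) - fine ((e^\-)%E k).
  rewrite /Rintegral -/(e k).
  rewrite funeposE funenegE; move: (e k) (fe k) => [r| |] // _ /=.
  rewrite -!EFin_max /= !maxEle; case: (lerP r 0) => h1; case: (lerP (-r) 0) => h2 /=; lra.
have cA := summable_cvg (fun i _ => funepos_ge0 e i) (summable_funepos sm').
have cB := summable_cvg (fun i _ => funeneg_ge0 e i) (summable_funeneg sm').
have su : series (fun k => \int[mu]_(x in F k) f x) =
   fun n => \sum_(0 <= k < n) fine ((e^\+)%E k) - \sum_(0 <= k < n) fine ((e^\-)%E k).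
  apply/funext => n; rewrite /series /= -sumrB; apply: eq_bigr => k _; exact: ue.
have cs : cvgn (series (fun k => \int[mu]_(x in F k) f x)).
  rewrite su; apply: is_cvgB; [exact: cA| exact: cB].
split => //.
have h : (limn (series (fun k => \int[mu]_(x in F k) f x)))%:E =
    (\int[mu]_(x in \bigcup_k F k) (EFin \o f) x)%E.
  rewrite -EFin_lim // integral_bigcup //.
  congr (limn _); apply/funext => n /=.
  rewrite /series /= -sumEFin; apply: eq_bigr => k _; rewrite /Rintegral fineK //; exact: fe k.
by rewrite /Rintegral -h.
Qed.

End Part1.


Section Geo.
Context {R : realType}.
Notation mu := (@lebesgue_measure R).

Lemma Aset_itv (c b : R) : 0 < c < 1 -> 0 < b ->
  Aset c b = `[b, (b/c)[ `|` `](-(b/c)), (-b)].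
Proof.
move=> /andP[c0 c1] b0.
have bc : b <= b / c by rewrite ler_pdivlMr //; nra.
apply/seteqP; split => t; rewrite /Aset /= !in_itv /= [c * _]mulrC -ltr_pdivlMr //;
set u := b / c; move: bc; rewrite -/u => bc.
- case: (lerP 0 t) => t0; [rewrite ger0_norm // | rewrite ltr0_norm //] => -[h1 h2];
    [left|right]; apply/andP; split; lra.
- case: (lerP 0 t) => t0; [rewrite ger0_norm // | rewrite ltr0_norm //] =>
    -[/andP[h1 h2]|/andP[h1 h2]]; split; lra.
Qed.

Lemma Aset_meas (c b : R) : 0 < c < 1 -> 0 < b -> measurable (Aset c b).
Proof.
by move=> hc b0; rewrite Aset_itv //; apply: measurableU; exact: measurable_itv.
Qed.

Lemma pow_le (c : R) i j : 0 < c < 1 -> (i <= j)%N -> c ^+ j <= c ^+ i.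
Proof. by move=> /andP[c0 c1] ij; apply: ler_wiXn2l => //; [exact: ltW|exact: ltW]. Qed.

Lemma triv1 (c a : R) : 0 < c < 1 -> 0 < a ->
  trivIset setT (fun j : nat => Aset c (c ^+ j * a)).
Proof.
move=> hc a0; have /andP[c0 c1] := hc.
have key (i j : nat) (t : R) : (i < j)%N -> c ^+ i * a <= `|t| -> c * `|t| < c ^+ j * a -> False.
  move=> ij h1 h2.
  have p1 : c ^+ j * a <= c ^+ i.+1 * a by apply: ler_wpM2r; [exact: ltW | exact: pow_le hc ij].
  have p2 : c * (c ^+ i * a) <= c * `|t| by apply: ler_wpM2l; [exact: ltW | exact: h1].
  move: p1 p2; rewrite exprS -mulrA; lra.
move=> i j _ _ [t [[h1 h2] [h3 h4]]].
case: (ltngtP i j) => // ij.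
- by case: (key i j t ij h1 h4).
- by case: (key j i t ij h3 h2).
Qed.

Lemma memA2 (c a t : R) j : 0 < c -> 
  Aset c (c ^- j.+1 * a) t <-> a <= c ^+ j.+1 * `|t| /\ c ^+ j.+2 * `|t| < a.
Proof.
move=> c0; have cp : 0 < c ^+ j.+1 by rewrite exprn_gt0.
rewrite /Aset /= ler_pdivrMl // ltr_pdivlMl // mulrA -exprSr.
by [].
Qed.

Lemma triv2 (c a : R) : 0 < c < 1 -> 0 < a ->
  trivIset setT (fun j : nat => Aset c (c ^- j.+1 * a)).
Proof.
move=> hc a0; have /andP[c0 c1] := hc.
have key (i j : nat) (t : R) : (i < j)%N -> c ^+ i.+2 * `|t| < a -> a <= c ^+ j.+1 * `|t| -> False.
  move=> ij h1 h2.
  have p1 : c ^+ j.+1 * `|t| <= c ^+ i.+2 * `|t| by apply: ler_wpM2r => //; apply: pow_le hc _; rewrite ltnS.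
  lra.
move=> i j _ _ [t [/(memA2 _ _ _ c0) [h1 h2] /(memA2 _ _ _ c0) [h3 h4]]].
case: (ltngtP i j) => // ij.
- by case: (key i j t ij h2 h3).
- by case: (key j i t ij h4 h1).
Qed.

End Geo.


Section Cover.
Context {R : realType}.
Notation mu := (@lebesgue_measure R).

Lemma pw (c z : R) : 0 < c < 1 -> 0 < z -> exists n, c ^+ n < z.
Proof.
move=> /andP[c0 c1] z0.
have cv : c ^+ n @[n --> \oo] --> (0:R) by apply: cvg_expr; rewrite gtr0_norm.
have := @cvgr_lt _ _ _ _ _ 0 cv z z0; move=> [N _ HN]; exists N; apply: HN => /=; exact: leqnn.
Qed.

Lemma coverA (c a t : R) : 0 < c < 1 -> 0 < a -> t != 0 ->
  (exists j, Aset c (c ^+ j * a) t) \/ (exists j, Aset c (c ^- j.+1 * a) t).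
Proof.
move=> hc a0 t0; have /andP[c0 c1] := hc.
have r0 : 0 < `|t| by rewrite normr_gt0.
have cr : c * `|t| < `|t| by nra.
case: (ltP (c * `|t|) a) => h.
- left.
  have exP : exists n, (fun n => c ^+ n * a <= `|t|) n.
    have [N HN] := pw hc (divr_gt0 r0 a0).
    by exists N; apply: ltW; rewrite -ltr_pdivlMr.
  case: (ex_minnP exP) => j Pj minj; exists j; split => //.
  case: j Pj minj => [|j] Pj minj; first by rewrite expr0 mul1r.
  have : ~~ (c ^+ j * a <= `|t|) by apply/negP => /minj; rewrite ltnn.
  rewrite -ltNge => hj.
  by rewrite exprS -mulrA ltr_pM2l.
- right.
  have exP : exists n, (fun n => c ^+ n * `|t| < a) n.
    have [N HN] := pw hc (divr_gt0 a0 r0).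
    by exists N; rewrite -ltr_pdivlMr.
  case: (ex_minnP exP) => n Pn minn.
  case: n Pn minn => [|[|j]] Pn minn.
  + by move: Pn; rewrite expr0 mul1r; lra.
  + by move: Pn; rewrite expr1; lra.
  + exists j; apply/(@memA2 R c a t j c0); split => //.
    have : ~~ (c ^+ j.+1 * `|t| < a) by apply/negP => /minn; rewrite ltnn.
    by rewrite -leNgt.
Qed.

End Cover.


Section P1.
Context {R : realType}.
Notation mu := (@lebesgue_measure R).

Lemma part1 (c : R) (hc : 0 < c < 1) (f : R -> R) :
  (@lebesgue_measure R).-integrable setT (EFin \o f) -> forall g : R, g != 0 ->
  let u1 := fun j : nat => Kop c f (c ^+ j * g) in
  let u2 := fun j : nat => Kop c f (c ^- j.+1 * g) in
  [/\ cvgn (series u1), cvgn (series u2) &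
     limn (series u1) + limn (series u2) = Rintegral (@lebesgue_measure R) setT f].
Proof.
move=> fi g g0 u1 u2; have /andP[c0 c1] := hc.
pose a := `|g|; have a0 : 0 < a by rewrite normr_gt0.
have E1 : u1 = fun j => \int[mu]_(x in Aset c (c ^+ j * a)) f x.
  by apply/funext => j; rewrite /u1 Kop_A // normrM normrX (gtr0_norm c0).
have E2 : u2 = fun j => \int[mu]_(x in Aset c (c ^- j.+1 * a)) f x.
  by apply/funext => j; rewrite /u2 Kop_A // normrM normfV normrX (gtr0_norm c0).
have m1 k : measurable (Aset c (c ^+ k * a)).
  by apply: Aset_meas => //; rewrite mulr_gt0 // exprn_gt0.
have m2 k : measurable (Aset c (c ^- k.+1 * a)).
  by apply: Aset_meas => //; rewrite mulr_gt0 // invr_gt0 exprn_gt0.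
have [cv1 l1] := series_int fi (triv1 hc a0) m1.
have [cv2 l2] := series_int fi (triv2 hc a0) m2.
rewrite E1 E2; split => //; rewrite l1 l2.
pose U1 := \bigcup_k Aset c (c ^+ k * a).
pose U2 := \bigcup_k Aset c (c ^- k.+1 * a).
have mU1 : measurable U1 by exact: bigcupT_measurable.
have mU2 : measurable U2 by exact: bigcupT_measurable.
have d12 : forall t, U1 t -> U2 t -> False.
  move=> t [i _ [h1 h2]] [j _ /(@memA2 R c a t j c0) [h3 h4]].
  have p1 : c ^+ i <= 1 by rewrite -(expr0 c); apply: pow_le.
  have p2 : c ^+ j.+1 <= c by rewrite -{2}(expr1 c); apply: pow_le.
  have q1 : c ^+ i * a <= a by rewrite -{2}(mul1r a); apply: ler_wpM2r => //; exact: ltW.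
  have q2 : c ^+ j.+1 * `|t| <= c * `|t| by apply: ler_wpM2r.
  lra.
have n0 : forall t, (U1 `|` U2) t -> t != 0.
  move=> t [[i _ [h1 h2]]|[j _ [h1 h2]]]; apply/eqP => t0; move: h1 h2; rewrite t0 normr0 mulr0.
  - have : 0 < c ^+ i * a by rewrite mulr_gt0 // exprn_gt0.
    lra.
  - have : 0 < c ^- j.+1 * a by rewrite mulr_gt0 // invr_gt0 exprn_gt0.
    lra.
have HT : [set: R] = (U1 `|` U2) `|` [set 0].
  apply/seteqP; split => t // _.
  have [->|t0] := eqVneq t 0; first by right.
  left; case: (coverA hc a0 t0) => -[j hj]; [left|right]; exists j => //.
have -> : \int[mu]_(x in setT) f x = \int[mu]_(x in (U1 `|` U2) `|` [set 0]) f x.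
  by rewrite -HT.
rewrite Rintegral_setU //.
- rewrite Rintegral_set1 addr0 Rintegral_setU //.
  + apply: integrableS fi => //; exact: measurableU.
  + by apply/eqP/seteqP; split => // t [h1 h2]; case: (d12 t h1 h2).
- exact: measurableU.
- apply: integrableS fi => //; apply: measurableU => //; exact: measurableU.
- apply/eqP/seteqP; split => // t [h1 h2]; move: (n0 t h1); rewrite h2 eqxx //.
Qed.

End P1.


Unset Implicit Arguments.

Theorem proposition3p3 (R : realType) (c : R) (hc : 0 < c < 1) :
  (forall f : R -> R,
     (@lebesgue_measure R).-integrable setT (EFin \o f) ->
     forall g : R, g != 0 ->
       let u1 := fun j : nat => Kop c f (c ^+ j * g) in
       let u2 := fun j : nat => Kop c f (c ^- j.+1 * g) in
       [/\ cvgn (series u1), cvgn (series u2) &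
           limn (series u1) + limn (series u2)
             = Rintegral (@lebesgue_measure R) setT f])
  /\
  (forall (k : nat) (f : R -> R),
     Ck k f ->
     (exists2 e : R, 0 < e & forall t : R, `|t| < e -> f t = 0) ->
     Ck k.+1 (Kop c f)).
Proof.
split.
- by move=> f fi g g0; exact: (part1 hc fi g0).
- by move=> k f cf fe; exact: (part2 hc cf fe).
Qed.
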